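(* If $\Sigma$ is of type $\mathfrak a_l$ ($l\ge1$) and $\Gamma=Z_{\widetilde M}(\widetilde K)$ ($\cong\mathbb Z_{l+1}$), then $$d(P_\Gamma)=\frac{\sqrt6}{6}(\psi,\psi)^{-1/2}\,l^{1/2}(l+2)^{1/2}(l+1)^{-1/2}.$$
   Context: Let $(\mathfrak u,\theta,\langle,\rangle)$ be a reduced, compact, irreducible orthogonal involutive Lie algebra ($\mathfrak u=\mathfrak k_0\oplus\mathfrak p_*$ the $\pm1$ eigenspaces of $\theta$), $\widetilde U$ the simply connected group of $\mathfrak u$, $\widetilde K$ the fixed group of the induced involution, $\widetilde M=\widetilde U/\widetilde K$, $\widetilde{\mathrm{Exp}}(X)=\widetilde\exp(X)\widetilde K$ ($X\in\mathfrak p_*$), and $Z_{\widetilde M}(\widetilde K)$ the group of points of $\widetilde M$ fixed by all left translations by $\widetilde K$. $(\cdot,\cdot)$ is the Killing form of $\mathfrak u\otimes\mathbb C$, positive definite on $\mathfrak h_{\mathfrak p_0}=\sqrt{-1}\mathfrak h_{\mathfrak p_*}$ ($\mathfrak h_{\mathfrak p_*}$ maximal abelian in $\mathfrak p_*$); $\Sigma\subset\mathfrak h_{\mathfrak p_0}$ is the restricted root system with simple roots $\gamma_1,\dots,\gamma_l$ and highest root $\psi=\sum d_i\gamma_i$; $e_j$ defined by $(e_j,\gamma_i)=\delta_{ij}/d_j$; $\triangle=\{x:(x,\gamma_i)\ge0\ \forall i,\ (x,\psi)\le1\}$; $P_\Gamma=\{x\in\triangle:(x,e_i)\le\frac12(e_i,e_i)$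 for all $i$ with $\widetilde{\mathrm{Exp}}(\pi\sqrt{-1}e_i)\in\Gamma\}$; $d(P_\Gamma)=\max_{x\in P_\Gamma}(x,x)^{1/2}$. *)

(* Defs.v *)
(* real closed field R, Euclidean space 'rV[R]_l with the
   standard dot product, used as a coordinate model of (h_p0, (.,.)). *)
From HB Require Import structures.
From mathcomp Require Import all_boot all_order all_algebra.
Set Implicit Arguments. Unset Strict Implicit. Unset Printing Implicit Defensive.
Import Order.TTheory GRing.Theory Num.Theory.
Local Open Scope ring_scope.

Definition dotv (R : rcfType) (l : nat) (x y : 'rV[R]_l) : R :=
  \sum_(i < l) x 0 i * y 0 i.

(* Gram matrix of the simple roots of a root system of type a_l
   (Dynkin diagram a chain): (g_i,g_i) = 2c, (g_i,g_{i+1}) = -c, else 0. *)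
Definition typeA_gram (R : rcfType) (l : nat) (c : R) (i j : 'I_l) : R :=
  if i == j then 2 * c
  else if ((i.+1 == j) || (j.+1 == i))%N then - c else 0.

Definition simple_roots_typeA (R : rcfType) (l : nat) (gamma : 'I_l -> 'rV[R]_l) :=
  exists2 c : R, 0 < c & forall i j, dotv (gamma i) (gamma j) = typeA_gram c i j.

Definition alcove (R : rcfType) (l : nat) (gamma : 'I_l -> 'rV[R]_l) (psi : 'rV[R]_l)
  (x : 'rV[R]_l) : Prop :=
  (forall i, 0 <= dotv x (gamma i)) /\ dotv x psi <= 1.

(* P_Gamma, where inG i  means  Exp(pi sqrt(-1) e_i) \in Gamma *)
Definition P_Gamma (R : rcfType) (l : nat) (gamma : 'I_l -> 'rV[R]_l) (psi : 'rV[R]_l)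
  (e : 'I_l -> 'rV[R]_l) (inG : pred 'I_l) (x : 'rV[R]_l) : Prop :=
  alcove gamma psi x /\ (forall i, inG i -> dotv x (e i) <= dotv (e i) (e i) / 2).

Definition is_max_norm (R : rcfType) (l : nat) (P : 'rV[R]_l -> Prop) (r : R) : Prop :=
  (exists x, P x /\ Num.sqrt (dotv x x) = r) /\
  (forall x, P x -> Num.sqrt (dotv x x) <= r).

(* Main.v *)
Require Import Defs.
From HB Require Import structures.
From mathcomp Require Import all_boot all_order all_algebra.
From mathcomp Require Import ring lra zify.
Import Order.TTheory GRing.Theory Num.Theory.
Local Open Scope ring_scope.
Set Implicit Arguments.
Unset Strict Implicit.

Lemma dotvC (R : rcfType) l (x y : 'rV[R]_l) : dotv x y = dotv y x.
Proof. by apply: eq_bigr => i _; rewrite mulrC. Qed.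

Lemma dotv_suml (R : rcfType) l (I : finType) (a : I -> R) (g : I -> 'rV[R]_l) y :
  dotv (\sum_j a j *: g j) y = \sum_j a j * dotv (g j) y.
Proof.
rewrite /dotv.
transitivity (\sum_(i < l) \sum_j a j * g j 0 i * y 0 i).
  apply: eq_bigr => i _; rewrite summxE mulr_suml; apply: eq_bigr => j _.
  by rewrite mxE.
rewrite exchange_big /=; apply: eq_bigr => j _; rewrite mulr_sumr.
by apply: eq_bigr => i _; rewrite mulrA.
Qed.

Lemma dotvBl (R : rcfType) l (x y z : 'rV[R]_l) : dotv (x - y) z = dotv x z - dotv y z.
Proof. by rewrite /dotv -sumrB; apply: eq_bigr => i _; rewrite !mxE mulrBl. Qed.

Lemma dotvZl (R : rcfType) l a (x y : 'rV[R]_l) : dotv (a *: x) y = a * dotv x y.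
Proof. by rewrite /dotv mulr_sumr; apply: eq_bigr => i _; rewrite !mxE mulrA. Qed.

Lemma dotv_ge0 (R : rcfType) l (x : 'rV[R]_l) : 0 <= dotv x x.
Proof. by apply: sumr_ge0 => i _; rewrite -expr2 sqr_ge0. Qed.

Lemma expand (R : rcfType) l (g e : 'I_l -> 'rV[R]_l)
  (he : forall i j, dotv (e j) (g i) = (if i == j then 1 else 0)) x :
  x = \sum_k dotv x (g k) *: e k.
Proof.
pose E := \matrix_(j, k) e j 0 k. pose G := \matrix_(i, k) g i 0 k.
have EG : E *m G^T = 1%:M.
  apply/matrixP => j i; rewrite !mxE.
  transitivity (dotv (e j) (g i)); first by apply: eq_bigr => k _; rewrite !mxE.
  by rewrite he eq_sym; case: eqP.
have GE := mulmx1C EG.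
have xE : x = x *m G^T *m E by rewrite -mulmxA GE mulmx1.
rewrite {1}xE.
rewrite mulmx_sum_row; apply: eq_bigr => k _.
congr (_ *: _).
  by rewrite !mxE; apply: eq_bigr => i _; rewrite !mxE.
by apply/rowP => a; rewrite !mxE.
Qed.

Lemma sum_delta (R : rcfType) n (F : nat -> R) m :
  \sum_(j < n) F j * ((j : nat) == m)%:R = if (m < n)%N then F m else 0.
Proof.
elim: n => [|n IH]; first by rewrite big_ord0.
rewrite big_ord_recr /= IH.
case: (ltnP m n) => h.
  have -> : (m < n.+1)%N by lia.
  have -> : (n == m) = false by lia.
  by rewrite mulr0 addr0.
case: (eqVneq n m) => [->|ne]; first by rewrite ltnSn mulr1 add0r.
have -> : (m < n.+1)%N = false by lia.
by rewrite mulr0 addr0.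
Qed.

Lemma sum_delta_ord (R : rcfType) n (F : 'I_n -> R) k :
  \sum_(j < n) F j * (if j == k then 1 else 0) = F k.
Proof.
rewrite (bigD1 k) //= eqxx mulr1 big1 ?addr0 // => j /negbTE ->.
by rewrite mulr0.
Qed.

Lemma gram_split (R : rcfType) l (c : R) (j k : 'I_l) :
  typeA_gram c j k = c * 2 * ((j:nat) == k)%:R - c * ((j.+1 == k)%N)%:R
     - c * ((k.+1 == j)%N)%:R.
Proof.
rewrite /typeA_gram -val_eqE /=.
case: (eqVneq (j:nat) k) => h1; case: (eqVneq j.+1 k) => h2;
  case: (eqVneq k.+1 j) => h3 /=; try (exfalso; lia); ring.
Qed.

Lemma sum_deltaS (R : rcfType) n (F : nat -> R) m :
  \sum_(j < n) F j.+1 * ((j.+1 == m)%N)%:R =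
  (if (m < n.+1)%N then F m else 0) - F 0%N * ((0 == m)%N)%:R.
Proof.
rewrite -(@sum_delta R n.+1 F m) big_ord_recl /=.
by rewrite addrC addKr.
Qed.

Lemma dot_tri (R : rcfType) l (g : 'I_l -> 'rV[R]_l) c
  (hg : forall i j, dotv (g i) (g j) = typeA_gram c i j) (U : nat -> R) (k : 'I_l) :
  U 0%N = 0 -> U l.+1 = 0 ->
  dotv (\sum_(j < l) U j.+1 *: g j) (g k) = c * (2 * U k.+1 - U k - U k.+2).
Proof.
move=> U0 Ul; rewrite dotv_suml.
rewrite (eq_bigr (fun j : 'I_l => c * 2 * (U j.+1 * ((j:nat) == k)%:R)
   - c * (U j.+1 * ((j.+1 == k)%N)%:R) - c * (U j.+1 * ((j : nat) == k.+1)%:R))); last first.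
  by move=> j _; rewrite hg gram_split (eq_sym (k.+1)); ring.
rewrite sumrB sumrB -!mulr_sumr (@sum_delta R l (fun j => U j.+1)) sum_deltaS
   (@sum_delta R l (fun j => U j.+1)) ltn_ord.
rewrite ltnS (ltnW (ltn_ord k)).
rewrite U0 mul0r subr0.
case: ltnP => h; first by ring.
have -> : k.+2 = l.+1 by have := ltn_ord k; lia.
rewrite Ul; ring.
Qed.

Definition Gf (R : rcfType) (l i m : nat) : R :=
  if (m <= i.+1)%N then m%:R * ((l.+1)%:R - (i.+1)%:R) / (l.+1)%:R
  else (i.+1)%:R * ((l.+1)%:R - m%:R) / (l.+1)%:R.

Lemma Gf_hi (R : rcfType) l i m : (i.+1 <= m)%N ->
  Gf R l i m = (i.+1)%:R * ((l.+1)%:R - m%:R) / (l.+1)%:R.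
Proof.
move=> h; rewrite /Gf; case: ifP => // h2.
have -> : m = i.+1 by lia.
by rewrite mulrC.
Qed.

Lemma Gf_diff (R : rcfType) l i k : (k < l)%N -> (i < l)%N ->
  2 * Gf R l i k.+1 - Gf R l i k - Gf R l i k.+2 = ((k == i)%N)%:R.
Proof.
move=> hk hi.
have N0 : (l.+1)%:R != 0 :> R by rewrite pnatr_eq0.
case: (ltngtP k i) => h.
- rewrite /Gf !ifT; try lia.
  rewrite /= -!natr1; field; rewrite natr1 //.
- rewrite !Gf_hi; try lia.
  rewrite /= -!natr1; field; rewrite natr1 //.
- subst k; rewrite (@Gf_hi R l i i.+2) // /Gf !ifT; try lia.
  rewrite /= -!natr1; field; rewrite natr1 //.
Qed.

Definition vf (R : rcfType) (l m : nat) : R := m%:R * ((l.+1)%:R - m%:R) / 2.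

Lemma vf_diff (R : rcfType) l k :
  2 * vf R l k.+1 - vf R l k - vf R l k.+2 = 1.
Proof. by rewrite /vf -!natr1; field; rewrite ?pnatr_eq0. Qed.

Lemma vf_sum_gen (R : rcfType) (N : R) n :
  \sum_(k < n) (k.+1)%:R * (N - (k.+1)%:R) / 2 =
  (N * (n%:R * (n%:R + 1) / 2) - n%:R * (n%:R + 1) * (2 * n%:R + 1) / 6) / 2.
Proof.
elim: n => [|n IH]; first by rewrite big_ord0; field; rewrite ?pnatr_eq0.
by rewrite big_ord_recr /= IH -!natr1; field; rewrite ?pnatr_eq0.
Qed.

Lemma dotvBr (R : rcfType) l (x y z : 'rV[R]_l) : dotv x (y - z) = dotv x y - dotv x z.
Proof. by rewrite dotvC dotvBl !(@dotvC R l x). Qed.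

Lemma sum_delta1 (R : rcfType) n m :
  \sum_(j < n) (((j : nat) == m)%:R : R) = if (m < n)%N then 1 else 0.
Proof.
rewrite -(@sum_delta R n (fun _ => 1) m); apply: eq_bigr => j _; by rewrite mul1r.
Qed.

Unset Implicit Arguments.

Theorem mainTheorem15 (R : rcfType) (l : nat) (hl : (0 < l)%N)
  (gamma : 'I_l -> 'rV[R]_l) (e : 'I_l -> 'rV[R]_l)
  (hA : simple_roots_typeA gamma)
  (he : forall i j : 'I_l, dotv (e j) (gamma i) = (if i == j then 1 else 0))
  (inG : pred 'I_l)
  (hG : forall i, inG i) :
  let psi := \sum_(i < l) gamma i in
  is_max_norm (P_Gamma gamma psi e inG)
    (Num.sqrt 6 / 6 * (Num.sqrt (dotv psi psi))^-1 * Num.sqrt l%:R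
       * Num.sqrt (l + 2)%:R * (Num.sqrt (l + 1)%:R)^-1).
Proof.
move=> psi.
case: hA => c c0 hg.
have cn0 : c != 0 by rewrite lt0r_neq0.
have expd := expand he.
have dge (i j : 'I_l) : dotv (gamma j) (e i) = if j == i then 1 else 0 by rewrite dotvC he.
pose N : R := (l.+1)%:R.
have N0 : 0 < N by rewrite ltr0n.
have Nn0 : N != 0 by rewrite lt0r_neq0.
pose bU (m : nat) : R := ((0 < m) && (m <= l))%N%:R.
have psiE : psi = \sum_(j < l) bU j.+1 *: gamma j.
  by apply: eq_bigr => j _; rewrite /bU /= ltn_ord /= scale1r.
have dpsi (k : 'I_l) : dotv psi (gamma k) = c * (((k:nat) == 0)%:R + ((k:nat) == l.-1)%:R).
  rewrite psiE (dot_tri hg) //; last by rewrite /bU /= ltnn.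
  congr (c * _); rewrite /bU /= ltn_ord /=.
  have hk := ltn_ord k.
  have -> : ((0 < k) && (k <= l))%N = ~~ ((k:nat) == 0) by lia.
  have -> : (k.+2 <= l)%N = ~~ ((k:nat) == l.-1) by lia.
  by case: eqP => _; case: eqP => _ /=; ring.
have psipsi : dotv psi psi = 2 * c.
  rewrite {1}psiE dotv_suml.
  rewrite (eq_bigr (fun j : 'I_l => c * (((j:nat) == 0)%:R + ((j:nat) == l.-1)%:R))); last first.
    by move=> j _; rewrite /bU /= ltn_ord /= mul1r dotvC dpsi.
  rewrite -mulr_sumr big_split /= !sum_delta1 hl.
  have -> : (l.-1 < l)%N by lia.
  by rewrite mulrC; congr (_ * _); rewrite -(natrD R 1 1).
have enorm (i : 'I_l) : dotv (e i) (e i) = Gf R l i i.+1 / c.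
  pose h := c^-1 *: \sum_(j < l) Gf R l i j.+1 *: gamma j.
  have hg' (k : 'I_l) : dotv h (gamma k) = ((k:nat) == i)%:R.
    rewrite dotvZl (dot_tri hg); first last.
    - rewrite (@Gf_hi R l i l.+1); last by rewrite ltnS ltnW.
      by rewrite subrr mulr0 mul0r.
    - by rewrite /Gf /= mul0r mul0r.
    by rewrite Gf_diff // mulrA mulVf // mul1r.
  have hE : h = e i.
    rewrite {1}(expd h) (bigD1 i) //= hg' eqxx scale1r big1 ?addr0 //.
    by move=> j hj; rewrite hg' val_eqE (negbTE hj) scale0r.
  rewrite -{1}hE {1}/h dotvZl dotv_suml.
  rewrite (eq_bigr (fun j : 'I_l => Gf R l i j.+1 * (if j == i then 1 else 0))); last first.
    by move=> j _; rewrite dge.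
  by rewrite sum_delta_ord mulrC.
pose xs := (c * N)^-1 *: \sum_(j < l) vf R l j.+1 *: gamma j.
have hxg (k : 'I_l) : dotv xs (gamma k) = N^-1.
  rewrite dotvZl (dot_tri hg) ?vf_diff; first by field; rewrite nat1r pnatr_eq0 cn0.
    by rewrite /vf mulr0n !mul0r.
  by rewrite /vf subrr mulr0 mul0r.
have hxe (i : 'I_l) : dotv xs (e i) = vf R l i.+1 / (c * N).
  rewrite dotvZl dotv_suml.
  rewrite (eq_bigr (fun j : 'I_l => vf R l j.+1 * (if j == i then 1 else 0))); last first.
    by move=> j _; rewrite dge.
  by rewrite sum_delta_ord mulrC.
have hxe2 (i : 'I_l) : dotv xs (e i) = dotv (e i) (e i) / 2.
  rewrite hxe enorm /vf /Gf leqnn -/N; field.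
  by rewrite cn0 nat1r pnatr_eq0.
have hxx : dotv xs xs = l%:R * (l%:R + 2) / (12 * c * N).
  rewrite {1}(expd xs) dotv_suml.
  rewrite (eq_bigr (fun k : 'I_l => (c * N * N)^-1 * ((k.+1)%:R * (N - (k.+1)%:R) / 2))); last first.
    by move=> k _; rewrite hxg dotvC hxe /vf; field; rewrite nat1r pnatr_eq0 cn0.
  rewrite -mulr_sumr vf_sum_gen /N -natr1; field.
  by rewrite natr1 pnatr_eq0 cn0.
set r := (X in is_max_norm _ X).
have r0 : 0 <= r.
  by rewrite /r !mulr_ge0 ?invr_ge0 ?sqrtr_ge0 ?ler0n.
have r2 : r ^+ 2 = dotv xs xs.
  rewrite /r !exprMn !exprVn !sqr_sqrtr ?ler0n ?dotv_ge0 // psipsi hxx /N -addn1 !natrD.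
  by field; rewrite nat1r pnatr_eq0 cn0.
have sxs : Num.sqrt (dotv xs xs) = r by rewrite -r2 sqrtr_sqr ger0_norm.
split.
  exists xs; split => //.
  split; last by move=> i _; rewrite hxe2.
  split; first by move=> i; rewrite hxg invr_ge0 ltW.
  rewrite dotvC psiE dotv_suml.
  rewrite (eq_bigr (fun _ => N^-1)); last first.
    by move=> j _; rewrite /bU /= ltn_ord /= mul1r dotvC hxg.
  rewrite sumr_const card_ord -mulr_natl ler_pdivrMr // mul1r ler_nat.
  exact: leqnSn.
move=> x [[ha hpsi] hc].
rewrite -sxs ler_sqrt ?dotv_ge0 //.
have key : 0 <= dotv x (xs - x).
  rewrite {1}(expd x) dotv_suml; apply: sumr_ge0 => k _; apply: mulr_ge0; first exact: ha.
  by rewrite dotvBr (dotvC (e k)) (dotvC (e k)) hxe2 subr_ge0 hc.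
have sq := dotv_ge0 (xs - x).
rewrite dotvBl !dotvBr (dotvC x xs) in sq.
rewrite dotvBr (dotvC x xs) in key.
lra.
Qed.
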